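(* Let $G$ be split reductive with root system of type $B_r$, $r\geqslant3$, with simple roots $\alpha_1,\dots,\alpha_r$ in Bourbaki labelling ($\alpha_r$ short), and let $\widetilde G$ be an $n$-fold Brylinski--Deligne cover associated with a Weyl-invariant quadratic form $Q$. Partition $\Phi_+=\Phi_{+,I}\sqcup\Phi_{+,II}\sqcup\Phi_{+,III}$ with $\Phi_{+,I}=\{\sum_{i\leqslant k\leqslant r}\alpha_k:1\leqslant i\leqslant r\}$, $\Phi_{+,II}=\{\sum_{i\leqslant k<j}\alpha_k:1\leqslant i<j\leqslant r\}$, $\Phi_{+,III}=\{\sum_{i\leqslant k<j}\alpha_k+2\sum_{j\leqslant k\leqslant r}\alpha_k:1\leqslant i<j\leqslant r\}$, and $\Phi_+^\vee=\Phi^\vee_{+,I}\sqcup\Phi^\vee_{+,II}\sqcup\Phi^\vee_{+,III}$ with $\Phi^\vee_{+,I}=\{\sum_{i\leqslant k<j}\alpha_k^\vee:1\leqslant i<j\leqslant r\}$, $\Phi^\vee_{+,II}=\{\sum_{i\leqslant k<j}\alpha_k^\vee+2\sum_{j\leqslant k<r}\alpha_k^\vee+\alpha_r^\vee:1\leqslant i<j\leqslant r\}$, $\Phi^\vee_{+,III}=\{2\sum_{i\leqslant k<r}\alpha_k^\vee+\alpha_r^\vee:1\leqslant i\leqslant r\}$. If $n_{\alpha_i}=2n_{\alpha_r}$ for all $1\leqslant i<r$, then $$f_X(\Phi^\vee_{+,I})=f_Y(\Phi_{+,II}),\quad f_X(\Phi^\vee_{+,II})=f_Y(\Phi_{+,III}),\quad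 f_X(\Phi^\vee_{+,III})=f_Y(\Phi_{+,I});$$ in particular $f_X(\Phi^\vee_+)=\frac{1}{2n_{\alpha_r}}[1,2r]=f_Y(\Phi_+)$. If $n_\alpha$ is constant on $\alpha\in\Delta$, then $f_X(\Phi^\vee_+)=\frac{1}{n_\alpha}[1,2r-1]=f_Y(\Phi_+)$.
   Context: $[a,b]$ denotes $\{a,a+1,\dots,b\}$. Notation: $\omega_\alpha$ fundamental weights, $\omega^\vee_\alpha$ fundamental coweights, $\rho^\vee=\sum_{\alpha\in\Delta}\omega_\alpha^\vee$. $B_Q(y,z)=Q(y+z)-Q(y)-Q(z)$, $Y_{Q,n}=\{y\in Y:B_Q(y,z)\in n\mathbf Z\ \forall z\in Y\}$, $n_\alpha=n/\gcd(n,Q(\alpha^\vee))$, and $\tilde n_\alpha\in\{n_\alpha,n_\alpha/2\}$ ($\alpha\in\Phi$) defined by $\mathbf Z\alpha^\vee\cap Y_{Q,n}=\mathbf Z\tilde n_\alpha\alpha^\vee$. $f_X:\Phi_+^\vee\to\mathbf Q$, $f_X(\beta^\vee)=\sum_{\alpha\in\Delta}\langle\omega_\alpha/\tilde n_\alpha,\beta^\vee\rangle$; $f_Y:\Phi_+\to\mathbf Q$, $f_Y(\beta)=\langle\rho^\vee,\beta\rangle/\tilde n_\beta$. *)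

(* Defs.v *)
From HB Require Import structures.
From mathcomp Require Import all_boot all_order all_algebra.
From mathcomp Require Import boolp classical_sets.
Set Implicit Arguments. Unset Strict Implicit. Unset Printing Implicit Defensive.
Import Order.TTheory GRing.Theory Num.Theory.
Local Open Scope ring_scope.

(* The cocharacter lattice Y and the character lattice X = Hom(Y,Z) are both
   modelled as Z^m = 'rV[int]_m, with the perfect pairing <x,y> = sum x_k y_k. *)
Definition dpair (m : nat) (x y : 'rV[int]_m) : int := \sum_(k < m) x 0 k * y 0 k.

Definition BQ (m : nat) (Q : 'rV[int]_m -> int) (y z : 'rV[int]_m) : int :=
  Q (y + z) - Q y - Q z.

(* Q : Y -> Z is a quadratic form: Q(ky) = k^2 Q(y) and B_Q is bilinear
   (B_Q is symmetric by definition, so additivity in the first argument suffices). *)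
Definition is_quadratic_form (m : nat) (Q : 'rV[int]_m -> int) : Prop :=
  (forall (k : int) y, Q (k *: y) = k ^+ 2 * Q y) /\
  (forall y z w, BQ Q (y + z) w = BQ Q y w + BQ Q z w).

(* Cartan matrix of type B_r in Bourbaki labelling, indices shifted to 'I_r
   (Bourbaki alpha_{i+1} <-> index i; alpha_r short <-> index r-1):
   cartanB i j = <alpha_j, alpha_i^vee>. *)
Definition cartanB (r : nat) (i j : 'I_r) : int :=
  if i == j then 2
  else if (i == r.-1 :> nat) && (j == r.-2 :> nat) then -2
  else if (i.+1 == j :> nat) || (j.+1 == i :> nat) then -1 else 0.

Definition inYQn (m n : nat) (Q : 'rV[int]_m -> int) (y : 'rV[int]_m) : Prop :=
  forall z : 'rV[int]_m, (n%:Z %| BQ Q y z)%Z.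

Definition nalpha (m n : nat) (Q : 'rV[int]_m -> int) (ac : 'rV[int]_m) : nat :=
  n %/ gcdn n (absz (Q ac)).

Definition ntilde (m n : nat) (Q : 'rV[int]_m -> int) (ac : 'rV[int]_m) : nat :=
  xget 0%N (fun k : nat => (0 < k)%N /\
    forall y : 'rV[int]_m,
      ((exists t : int, y = t *: ac) /\ inYQn n Q y) <->
      (exists t : int, y = (t * k%:Z) *: ac)).

(* Squared root lengths for B_r: (alpha_i,alpha_i) = 2 for long, 1 for short alpha_r. *)
Definition len2 (r : nat) (i : 'I_r) : int := if i == r.-1 :> nat then 1 else 2.

(* 2 (beta,beta) for beta = sum_k c_k alpha_k, using
   (alpha_i,alpha_j) = <alpha_j,alpha_i^vee> (alpha_i,alpha_i)/2. *)
Definition norm2x2 (r : nat) (c : 'I_r -> int) : int :=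
  \sum_(i < r) \sum_(j < r) c i * c j * (cartanB i j * len2 i).

(* Coordinates of the coroot beta^vee = 2 beta/(beta,beta) in the basis of simple
   coroots: d_k = c_k (alpha_k,alpha_k)/(beta,beta). *)
Definition coroot_coord (r : nat) (c : 'I_r -> int) (k : 'I_r) : int :=
  ((2 * c k * len2 k) %/ norm2x2 c)%Z.

Definition corootY (r m : nat) (alphac : 'I_r -> 'rV[int]_m) (c : 'I_r -> int)
  : 'rV[int]_m := \sum_(k < r) coroot_coord c k *: alphac k.

(* f_X(beta^vee) = sum_alpha <omega_alpha/ntilde_alpha, beta^vee>,
   beta^vee = sum_k d_k alpha_k^vee given by its coordinates d. *)
Definition fX (r m n : nat) (alphac : 'I_r -> 'rV[int]_m) (Q : 'rV[int]_m -> int)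
  (d : 'I_r -> int) : rat :=
  \sum_(k < r) (d k)%:~R / (ntilde n Q (alphac k))%:R.

(* f_Y(beta) = <rho^vee, beta>/ntilde_beta, beta = sum_k c_k alpha_k. *)
Definition fY (r m n : nat) (alphac : 'I_r -> 'rV[int]_m) (Q : 'rV[int]_m -> int)
  (c : 'I_r -> int) : rat :=
  (\sum_(k < r) c k)%:~R / (ntilde n Q (corootY alphac c))%:R.

(* Positive roots (coordinates w.r.t. simple roots), 0-based indices. *)
Definition rootI (r : nat) (i : 'I_r) : 'I_r -> int :=
  fun k => (nat_of_bool (i <= k)%N)%:Z.
Definition rootII (r : nat) (i j : 'I_r) : 'I_r -> int :=
  fun k => (nat_of_bool (i <= k < j)%N)%:Z.
Definition rootIII (r : nat) (i j : 'I_r) : 'I_r -> int :=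
  fun k => (nat_of_bool (i <= k < j)%N + 2 * nat_of_bool (j <= k)%N)%:Z.

(* Positive coroots (coordinates w.r.t. simple coroots). *)
Definition corootI (r : nat) (i j : 'I_r) : 'I_r -> int :=
  fun k => (nat_of_bool (i <= k < j)%N)%:Z.
Definition corootII (r : nat) (i j : 'I_r) : 'I_r -> int :=
  fun k => (nat_of_bool (i <= k < j)%N + 2 * nat_of_bool (j <= k < r.-1)%N
            + nat_of_bool (k == r.-1 :> nat))%:Z.
Definition corootIII (r : nat) (i : 'I_r) : 'I_r -> int :=
  fun k => (2 * nat_of_bool (i <= k < r.-1)%N + nat_of_bool (k == r.-1 :> nat))%:Z.

Local Open Scope classical_set_scope.

Definition PhiI (r : nat) : set ('I_r -> int) := [set c | exists i : 'I_r, c = rootI i].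
Definition PhiII (r : nat) : set ('I_r -> int) :=
  [set c | exists i j : 'I_r, (i < j)%N /\ c = rootII i j].
Definition PhiIII (r : nat) : set ('I_r -> int) :=
  [set c | exists i j : 'I_r, (i < j)%N /\ c = rootIII i j].
Definition PhicI (r : nat) : set ('I_r -> int) :=
  [set d | exists i j : 'I_r, (i < j)%N /\ d = corootI i j].
Definition PhicII (r : nat) : set ('I_r -> int) :=
  [set d | exists i j : 'I_r, (i < j)%N /\ d = corootII i j].
Definition PhicIII (r : nat) : set ('I_r -> int) :=
  [set d | exists i : 'I_r, d = corootIII i].

Definition PhiPos (r : nat) := @PhiI r `|` @PhiII r `|` @PhiIII r.
Definition PhicPos (r : nat) := @PhicI r `|` @PhicII r `|` @PhicIII r.
Arguments PhiI : clear implicits. Arguments PhiII : clear implicits. Arguments PhiIII : clear implicits.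
Arguments PhicI : clear implicits. Arguments PhicII : clear implicits. Arguments PhicIII : clear implicits.
Arguments PhiPos : clear implicits. Arguments PhicPos : clear implicits.

Definition scaled_interval (N a b : nat) : set rat :=
  [set q | exists k : nat, (a <= k <= b)%N /\ q = k%:R / N%:R].

(* Main.v *)
Require Import Defs.
From HB Require Import structures.
From mathcomp Require Import all_boot all_order all_algebra.
From mathcomp Require Import boolp classical_sets.
From mathcomp Require Import zify ring lra.
Import Order.TTheory GRing.Theory Num.Theory.
Set Implicit Arguments. Unset Strict Implicit. Unset Printing Implicit Defensive.
Local Open Scope ring_scope.

Section Basics.
Variables (m : nat).
Implicit Types (x y z w : 'rV[int]_m).

Lemma dpairD x y z : dpair x (y + z) = dpair x y + dpair x z.
Proof. by rewrite /dpair -big_split; apply: eq_bigr => k _; rewrite mxE mulrDr. Qed.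
Lemma dpair0 x : dpair x 0 = 0.
Proof. by rewrite /dpair big1 // => k _; rewrite mxE mulr0. Qed.
Lemma dpairZ x t y : dpair x (t *: y) = t * dpair x y.
Proof. by rewrite /dpair mulr_sumr; apply: eq_bigr => k _; rewrite mxE mulrCA. Qed.
Lemma dpair_sum x s (F : 'I_s -> 'rV[int]_m) :
  dpair x (\sum_(k < s) F k) = \sum_(k < s) dpair x (F k).
Proof. exact: (big_morph (dpair x) (dpairD x) (dpair0 x)). Qed.

Variable Q : 'rV[int]_m -> int.
Hypothesis HQ : is_quadratic_form Q.

Lemma BQsym y z : BQ Q y z = BQ Q z y.
Proof. by rewrite /BQ [y + z]addrC; ring. Qed.
Lemma BQD y z w : BQ Q (y + z) w = BQ Q y w + BQ Q z w.
Proof. by case: HQ. Qed.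
Lemma BQ0 w : BQ Q 0 w = 0.
Proof. have := BQD 0 0 w; rewrite addr0; lia. Qed.
Lemma BQN y w : BQ Q (- y) w = - BQ Q y w.
Proof. have := BQD y (- y) w; rewrite subrr BQ0; lia. Qed.
Lemma BQMn y w k : BQ Q (y *+ k) w = BQ Q y w *+ k.
Proof. elim: k => [|k IH]; first by rewrite !mulr0n BQ0. by rewrite !mulrS BQD IH. Qed.
Lemma BQZ t y w : BQ Q (t *: y) w = t * BQ Q y w.
Proof.
case: t => k.
  by rewrite -natz scaler_nat BQMn mulr_natl.
by rewrite NegzE !scaleNr mulNr BQN -natz scaler_nat BQMn mulr_natl.
Qed.
Lemma BQ_sum s (F : 'I_s -> 'rV[int]_m) w :
  BQ Q (\sum_(k < s) F k) w = \sum_(k < s) BQ Q (F k) w.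
Proof. exact: (big_morph (BQ Q ^~ w) (fun y z => BQD y z w) (BQ0 w)). Qed.

Lemma Qscale t y : Q (t *: y) = t ^+ 2 * Q y.
Proof. by case: HQ. Qed.

Lemma B_refl (a : 'rV[int]_m) (ac : 'rV[int]_m) :
  dpair a ac = 2 ->
  (forall y, Q (y - dpair a y *: ac) = Q y) ->
  forall z, BQ Q ac z = Q ac * dpair a z.
Proof.
move=> Hac HW.
have key : forall z, dpair a z * (dpair a z * Q ac - BQ Q ac z) = 0.
  move=> z; set t := dpair a z.
  have e1 : Q (z - t *: ac) = BQ Q z ((- t) *: ac) + Q z + Q ((- t) *: ac).
    by rewrite /BQ scaleNr; ring.
  rewrite HW BQsym BQZ Qscale in e1.
  rewrite sqrrN in e1. nia.
move=> z.
have k1 := key z. have k2 := key (z + ac).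
rewrite dpairD Hac in k2.
rewrite BQsym BQD in k2.
have hac : BQ Q ac ac = 2 * Q ac.
  rewrite /BQ -mulr2n -scaler_nat Qscale. lia.
rewrite hac BQsym in k2. nia.
Qed.
End Basics.

Lemma dvd_mul_gcd n a b : (0 < n)%N -> (n %| a * b)%N = (n %/ gcdn n b %| a)%N.
Proof.
move=> n0; set g := gcdn n b.
have g0 : (0 < g)%N by rewrite gcdn_gt0 n0.
have hn : n = (n %/ g * g)%N by rewrite divnK // dvdn_gcdl.
have hb : b = (b %/ g * g)%N by rewrite divnK // dvdn_gcdr.
have cop : coprime (n %/ g) (b %/ g).
  rewrite /coprime; apply/eqP; apply/eqP; rewrite -(eqn_pmul2r g0).
  by rewrite muln_gcdl -hn -hb mul1n eqxx.
by rewrite {1}hn {1}hb mulnA dvdn_pmul2r // Gauss_dvdl.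
Qed.

Lemma dvdz_mul_gcd (n : nat) (t M : int) : (0 < n)%N ->
  (n%:Z %| t * M)%Z = ((n %/ gcdn n `|M|)%:Z %| t)%Z.
Proof. by move=> n0; rewrite !dvdzE abszM /= dvd_mul_gcd. Qed.

Lemma scale_inj m (y : 'rV[int]_m) (a b : int) : y != 0 -> a *: y = b *: y -> a = b.
Proof.
move=> y0 e.
have [j yj] : exists j, y 0 j != 0.
  apply/existsP; apply: contraR y0 => /existsPn h; apply/eqP/matrixP => i j.
  by rewrite ord1 !mxE; apply/eqP/negbNE/h.
have := congr1 (fun v : 'rV[int]_m => v 0 j) e; rewrite /= !mxE => /eqP.
by move=> /eqP; apply: mulIf.
Qed.

Lemma ntilde_eq m n Q (y : 'rV[int]_m) (k : nat) : y != 0 -> (0 < k)%N ->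
  (forall t : int, inYQn n Q (t *: y) <-> (k%:Z %| t)%Z) -> ntilde n Q y = k.
Proof.
move=> y0 k0 H; rewrite /ntilde; apply: xget_unique.
  split => // y'; split.
    move=> [[t ->]] /H /dvdzP [s ->]; by exists s.
  move=> [t ->]; split; first by exists (t * k%:Z).
  by apply/H; rewrite dvdz_mull.
move=> k' [k'0 Hk'].
have h1 : (k%:Z %| k'%:Z)%Z.
  apply/H; have [_ /(_ _)[]] := Hk' (k'%:Z *: y) => //.
  by exists 1; rewrite mul1r.
have [t ht] : exists t : int, k%:Z *: y = (t * k'%:Z) *: y.
  apply/(Hk' (k%:Z *: y)); split; first by exists k%:Z.
  by apply/H.
have h2 : (k'%:Z %| k%:Z)%Z.
  by rewrite (scale_inj y0 ht) dvdz_mull.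
rewrite !dvdzE /= in h1 h2; apply/eqP; by rewrite eqn_dvd h1 h2.
Qed.

Lemma ntilde_val m n Q (y : 'rV[int]_m) (M : int) : is_quadratic_form Q ->
  y != 0 -> (0 < n)%N ->
  (forall z, (M %| BQ Q y z)%Z) -> (exists z, BQ Q y z = M \/ BQ Q y z = - M) ->
  ntilde n Q y = (n %/ gcdn n `|M|)%N.
Proof.
move=> HQ y0 n0 Hd [z0 Hz0]; apply: ntilde_eq => //.
  by rewrite divn_gt0 ?gcdn_gt0 ?n0 // dvdn_leq // dvdn_gcdl.
move=> t; rewrite -dvdz_mul_gcd //; split.
  move=> hh; have := hh z0. rewrite BQZ //.
  case: Hz0 => ->; rewrite ?mulrN !dvdzE ?abszN; exact: id.
move=> h z; rewrite BQZ //; case/dvdzP: (Hd z) => s ->.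
by rewrite mulrCA; apply: dvdz_mull.
Qed.


Ltac dec b := first [ have ->: b = true by lia | have ->: b = false by lia | case: (boolP b) => ? ].
Ltac crush := rewrite /=; repeat match goal with
 | |- context [(?x <= ?y)%N] => dec (x <= y)%N
 | |- context [(?x == ?y :> nat)] => dec (x == y)
 end; rewrite /=; lia.

Lemma sum_delta s (G : nat -> int) (x : nat) :
  \sum_(k < s) (if (k == x :> nat) then G k else 0) = if (x < s)%N then G x else 0.
Proof.
elim: s => [|s IH]; first by rewrite big_ord0.
rewrite big_ord_recr IH /=.
have [->|hx] := eqVneq x s; first by rewrite ltnn ltnSn add0r.
by rewrite addr0 ltnS (leq_eqVlt x s) (negbTE hx).
Qed.

Section Main.
Variables (p : nat).
Local Notation r := p.+3.

Definition cB (i j : nat) : int :=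
  if i == j then 2 else if (i == p.+2) && (j == p.+1) then -2
  else if (i.+1 == j) || (j.+1 == i) then -1 else 0.
Lemma cartanE (i j : 'I_r) : cartanB i j = cB i j.
Proof. by []. Qed.

Lemma row_sum (F : nat -> int) (a : 'I_r) :
  \sum_(k < r) F k * cartanB a k =
  2 * F a - (if (0 < a)%N then (if a == p.+2 :> nat then 2 else 1) * F a.-1 else 0)
   - (if (a.+1 < r)%N then F a.+1 else 0).
Proof.
have e : forall k : 'I_r, F k * cartanB a k =
   (if (k == a :> nat) then 2 * F k else 0)
 - (if (k == a.-1 :> nat) then (if (0 < a)%N then (if a == p.+2 :> nat then 2 else 1) * F k else 0) else 0)
 - (if (k == a.+1 :> nat) then F k else 0).
  move=> k; have := ltn_ord k; have := ltn_ord a; rewrite cartanE /cB; crush.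
rewrite (eq_bigr _ (fun k _ => e k)) !sumrB !sum_delta.
rewrite (sum_delta _ (fun k => 2 * F k)) (sum_delta _ (fun k => if (0 < a)%N then (if a == p.+2 :> nat then 2 else 1) * F k else 0)). have := ltn_ord a; crush.
Qed.

Lemma col_sum (F : nat -> int) (a : 'I_r) :
  \sum_(k < r) F k * cartanB k a =
  2 * F a - (if (0 < a)%N then F a.-1 else 0)
   - (if (a.+1 < r)%N then (if a.+1 == p.+2 :> nat then 2 else 1) * F a.+1 else 0).
Proof.
have e : forall k : 'I_r, F k * cartanB k a =
   (if (k == a :> nat) then 2 * F k else 0)
 - (if (k == a.-1 :> nat) then (if (0 < a)%N then F k else 0) else 0)
 - (if (k == a.+1 :> nat) then (if a.+1 == p.+2 :> nat then 2 else 1) * F k else 0).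
  move=> k; have := ltn_ord k; have := ltn_ord a; rewrite cartanE /cB; crush.
rewrite (eq_bigr _ (fun k _ => e k)) !sumrB.
rewrite (sum_delta _ (fun k => 2 * F k)) (sum_delta _ (fun k => if (0 < a)%N then F k else 0)).
rewrite (sum_delta _ (fun k => (if a.+1 == p.+2 :> nat then 2 else 1) * F k)).
have := ltn_ord a; crush.
Qed.

Definition RS (F : nat -> int) (a : nat) : int :=
  2 * F a - (if (0 < a)%N then (if a == p.+2 :> nat then 2 else 1) * F a.-1 else 0)
   - (if (a.+1 < r)%N then F a.+1 else 0).

Lemma norm2x2E (F : nat -> int) :
  norm2x2 (fun k : 'I_r => F k) = \sum_(i < r) F i * len2 i * RS F i.
Proof.
rewrite /norm2x2; apply: eq_bigr => i _; rewrite /RS -row_sum mulr_sumr.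
by apply: eq_bigr => j _; ring.
Qed.

Lemma normI (i0 : 'I_r) : norm2x2 (rootI i0) = 2.
Proof.
rewrite /rootI (norm2x2E (fun k => (i0 <= k)%N%:Z)).
have e : forall i : 'I_r, (i0 <= i)%N%:Z * len2 i * RS (fun k => (i0 <= k)%N%:Z) i
   = if (i == i0 :> nat) then 2 else 0.
  move=> i; have := ltn_ord i; have := ltn_ord i0; rewrite /len2 /RS; crush.
by rewrite (eq_bigr _ (fun i _ => e i)) (sum_delta _ (fun _ => 2)) ltn_ord.
Qed.



Lemma normII (i0 j0 : 'I_r) : (i0 < j0)%N -> norm2x2 (rootII i0 j0) = 4.
Proof.
move=> hij.
rewrite /rootII (norm2x2E (fun k => (i0 <= k < j0)%N%:Z)).
have e : forall i : 'I_r, (i0 <= i < j0)%N%:Z * len2 i * RS (fun k => (i0 <= k < j0)%N%:Z) i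
   = (if (i == i0 :> nat) then (if (i0.+1 < j0)%N then 2 else 4) else 0)
   + (if (i == j0.-1 :> nat) then (if (i0 < j0.-1)%N then 2 else 0) else 0).
  move=> i; have := ltn_ord i; have := ltn_ord j0; rewrite /len2 /RS; crush.
rewrite (eq_bigr _ (fun i _ => e i)) big_split /=.
rewrite (sum_delta _ (fun _ => (if (i0.+1 < j0)%N then 2 else 4))).
rewrite (sum_delta _ (fun _ => (if (i0 < j0.-1)%N then 2 else 0))).
have := ltn_ord j0; crush.
Qed.

Lemma normIII (i0 j0 : 'I_r) : (i0 < j0)%N -> norm2x2 (rootIII i0 j0) = 4.
Proof.
move=> hij.
rewrite /rootIII (norm2x2E (fun k => ((i0 <= k < j0)%N + 2 * (j0 <= k)%N)%N%:Z)).
have e : forall i : 'I_r, ((i0 <= i < j0)%N + 2 * (j0 <= i)%N)%N%:Z * len2 i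
     * RS (fun k => ((i0 <= k < j0)%N + 2 * (j0 <= k)%N)%N%:Z) i
   = (if (i == i0 :> nat) then (if (i0.+1 == j0)%N then 0 else 2) else 0)
   + (if (i == j0.-1 :> nat) then (if (i0 < j0.-1)%N then -2 else 0) else 0)
   + (if (i == j0 :> nat) then 4 else 0).
  move=> i; have := ltn_ord i; have := ltn_ord j0; rewrite /len2 /RS; crush.
rewrite (eq_bigr _ (fun i _ => e i)) !big_split /=.
rewrite (sum_delta _ (fun _ => (if (i0.+1 == j0)%N then 0 else 2))).
rewrite (sum_delta _ (fun _ => (if (i0 < j0.-1)%N then -2 else 0))).
rewrite (sum_delta _ (fun _ => 4)).
have := ltn_ord j0; crush.
Qed.

End Main.


Ltac crush0 := rewrite /=; repeat match goal with
 | |- context [(?x <= ?y)%N] => dec (x <= y)%N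
 | |- context [(?x == ?y :> nat)] => dec (x == y)
 end; rewrite /=; lia.
Ltac crush ::= intros; rewrite /=; repeat match goal with
 | |- context [(?x <= ?y)%N] => dec (x <= y)%N
 | |- context [(?x == ?y :> nat)] => dec (x == y)
 end; rewrite /=; lia.

Ltac noif b := lazymatch b with context [if _ then _ else _] => fail | _ => idtac end.
Ltac crush2 := intros; rewrite /=; repeat match goal with
 | |- context [if ?b then _ else _] => noif b; dec b
 | |- context [(?x <= ?y)%N] => dec (x <= y)%N
 | |- context [(?x == ?y :> nat)] => dec (x == y)
 end; rewrite /=; lia.

Lemma ar1 (a N : nat) : (0 < N)%N -> a%:R / (2 * N)%:R + 1 / N%:R = (a + 2)%:R / (2 * N)%:R :> rat.
Proof.
move=> h; have hN : N%:R != 0 :> rat by rewrite pnatr_eq0 -lt0n.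
by rewrite natrD natrM; field.
Qed.
Lemma ar2 (b N : nat) : (0 < N)%N -> b%:R / N%:R = (2 * b)%:R / (2 * N)%:R :> rat.
Proof.
move=> h; have hN : N%:R != 0 :> rat by rewrite pnatr_eq0 -lt0n.
by rewrite !natrM; field.
Qed.
Lemma ar3 (a N : nat) : (0 < N)%N -> a%:R / N%:R + 1 / N%:R = (a + 1)%:R / N%:R :> rat.
Proof.
move=> h; have hN : N%:R != 0 :> rat by rewrite pnatr_eq0 -lt0n.
by rewrite natrD; field.
Qed.

Section Main2.
Variables (p : nat).
Local Notation r := p.+3.

Lemma ccI (i0 k : 'I_r) : coroot_coord (rootI i0) k = corootIII i0 k.
Proof.
rewrite /coroot_coord normI.
have -> : 2 * rootI i0 k * len2 k = corootIII i0 k * 2.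
  have := ltn_ord k; have := ltn_ord i0; rewrite /rootI /corootIII /len2; crush.
by rewrite mulzK.
Qed.

Lemma ccII (i0 j0 k : 'I_r) : (i0 < j0)%N -> coroot_coord (rootII i0 j0) k = corootI i0 j0 k.
Proof.
move=> h; rewrite /coroot_coord normII //.
have -> : 2 * rootII i0 j0 k * len2 k = corootI i0 j0 k * 4.
  have := ltn_ord k; have := ltn_ord j0; rewrite /rootII /corootI /len2; crush.
by rewrite mulzK.
Qed.

Lemma ccIII (i0 j0 k : 'I_r) : (i0 < j0)%N -> coroot_coord (rootIII i0 j0) k = corootII i0 j0 k.
Proof.
move=> h; rewrite /coroot_coord normIII //.
have -> : 2 * rootIII i0 j0 k * len2 k = corootII i0 j0 k * 4.
  have := ltn_ord k; have := ltn_ord j0; rewrite /rootIII /corootII /len2; crush.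
by rewrite mulzK.
Qed.

Lemma sum_iv s x y : (x <= y)%N ->
  \sum_(k < s) (nat_of_bool ((x <= k) && (k < y))%N)%:Z = (minn y s)%:Z - (minn x s)%:Z.
Proof.
move=> hxy; elim: s => [|s IH]; first by rewrite big_ord0; lia.
rewrite big_ord_recr /= IH; crush.
Qed.

Lemma intr_sum s (F : 'I_s -> int) : (\sum_(k < s) F k)%:~R = \sum_(k < s) (F k)%:~R :> rat.
Proof. exact: (big_morph _ (@intrD _) (mulr0z _)). Qed.

Variables (m n : nat) (alpha alphac : 'I_r -> 'rV[int]_m) (Q : 'rV[int]_m -> int).
Hypotheses (n0 : (0 < n)%N)
  (Hcar : forall i j : 'I_r, dpair (alpha j) (alphac i) = cartanB i j)
  (HQ : is_quadratic_form Q)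
  (HW : forall (i : 'I_r) (y : 'rV[int]_m), Q (y - dpair (alpha i) y *: alphac i) = Q y).

Lemma Bac i z : BQ Q (alphac i) z = Q (alphac i) * dpair (alpha i) z.
Proof. by apply: (B_refl HQ) => //; rewrite Hcar /cartanB eqxx. Qed.

Lemma Qac_rel i j : Q (alphac i) * cartanB j i = Q (alphac j) * cartanB i j.
Proof. by rewrite -Hcar -Bac BQsym Bac Hcar. Qed.

Lemma Qlong (k : nat) : (k < p.+2)%N -> Q (alphac (inord k)) = Q (alphac ord0).
Proof.
elim: k => [|k IH] hk.
  by congr (Q (alphac _)); apply/val_inj; rewrite /= inordK.
rewrite -IH ?(ltn_trans _ hk) //.
have := Qac_rel (inord k) (inord k.+1).
rewrite !cartanE /cB !inordK; try lia.
crush0.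
Qed.

Lemma Qshort : Q (alphac ord_max) = 2 * Q (alphac ord0).
Proof.
have := Qac_rel (inord p.+1) ord_max.
rewrite !cartanE /cB inordK // (Qlong (ltnSn _)); crush0.
Qed.

Lemma Qac (k : 'I_r) : Q (alphac k) = (if k == p.+2 :> nat then 2 else 1) * Q (alphac ord0).
Proof.
have := ltn_ord k; rewrite ltnS leq_eqVlt => /orP [/eqP h|h].
  have -> : k = ord_max by apply/val_inj.
  by rewrite Qshort /= eqxx.
rewrite -(Qlong h) inord_val (ltn_eqF h) mul1r //.
Qed.

Lemma nt_simple (k : 'I_r) : ntilde n Q (alphac k) = nalpha n Q (alphac k).
Proof.
rewrite /nalpha; apply: ntilde_val => //.
- apply/eqP => h; have := Hcar k k; rewrite h dpair0 /cartanB eqxx //.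
- by move=> z; rewrite Bac dvdz_mulr // dvdzz.
- exists (alphac (inord (if k == 0 :> nat then 1 else k.-1))).
  rewrite Bac Hcar cartanE /cB inordK; last by have := ltn_ord k; crush2.
  have := ltn_ord k; crush2.
Qed.


Lemma nt_gen (c d : 'I_r -> int) (M : int) (a : 'I_r) :
  (forall k, d k * Q (alphac k) = M * c k) ->
  (\sum_(k < r) c k * cartanB a k = 1 \/ \sum_(k < r) c k * cartanB a k = -1) ->
  \sum_(k < r) d k * cartanB k a != 0 ->
  ntilde n Q (\sum_(k < r) d k *: alphac k) = (n %/ gcdn n `|M|)%N.
Proof.
move=> hd hw hnz.
have hB : forall z, BQ Q (\sum_(k < r) d k *: alphac k) z
            = M * \sum_(k < r) c k * dpair (alpha k) z.
  move=> z; rewrite (BQ_sum HQ) mulr_sumr; apply: eq_bigr => k _.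
  by rewrite (BQZ HQ) Bac mulrA hd mulrA.
apply: ntilde_val => //.
- apply: contra hnz => /eqP h.
  have := congr1 (dpair (alpha a)) h; rewrite dpair0 dpair_sum => hs.
  by apply/eqP; rewrite -[X in _ = X]hs; apply: eq_bigr => k _; rewrite dpairZ Hcar.
- by move=> z; rewrite hB dvdz_mulr // dvdzz.
- exists (alphac a); rewrite hB.
  have -> : \sum_(k < r) c k * dpair (alpha k) (alphac a) = \sum_(k < r) c k * cartanB a k.
    by apply: eq_bigr => k _; rewrite Hcar.
  by case: hw => ->; [left; rewrite mulr1 | right; rewrite mulrN1].
Qed.

Lemma ntY_I (i0 : 'I_r) :
  ntilde n Q (corootY alphac (rootI i0)) = nalpha n Q (alphac ord_max).
Proof.
rewrite /corootY; under eq_bigr => k _ do rewrite ccI.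
rewrite /nalpha (@nt_gen (rootI i0) _ (Q (alphac ord_max)) (inord i0.-1)) //.
- move=> k; rewrite Qshort Qac /rootI /corootIII; have := ltn_ord k; have := ltn_ord i0; crush.
- rewrite (row_sum (fun k => (i0 <= k)%N%:Z)) inordK; last by have := ltn_ord i0; crush.
  have := ltn_ord i0; crush2.
- rewrite (col_sum (fun k => (2 * nat_of_bool (i0 <= k < r.-1)%N + nat_of_bool (k == r.-1 :> nat))%N%:Z)).
  rewrite inordK; last by have := ltn_ord i0; crush.
  have := ltn_ord i0; crush2.
Qed.


Lemma ntY_II (i0 j0 : 'I_r) : (i0 < j0)%N ->
  ntilde n Q (corootY alphac (rootII i0 j0)) = nalpha n Q (alphac ord0).
Proof.
move=> hij.
rewrite /corootY; under eq_bigr => k _ do rewrite (ccII _ hij).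
rewrite /nalpha (@nt_gen (rootII i0 j0) _ (Q (alphac ord0))
   (inord (if i0 == 0 :> nat then (if j0 == 1 :> nat then 1 else 0) else i0.-1))) //.
- move=> k; rewrite Qac /rootII /corootI; have := ltn_ord k; have := ltn_ord j0; crush.
- rewrite (row_sum (fun k => (i0 <= k < j0)%N%:Z)) inordK; last by have := ltn_ord i0; crush2.
  have := ltn_ord j0; crush2.
- rewrite (col_sum (fun k => (i0 <= k < j0)%N%:Z)) inordK; last by have := ltn_ord i0; crush2.
  have := ltn_ord j0; crush2.
Qed.

Lemma ntY_III (i0 j0 : 'I_r) : (i0 < j0)%N ->
  ntilde n Q (corootY alphac (rootIII i0 j0)) = nalpha n Q (alphac ord0).
Proof.
move=> hij.
rewrite /corootY; under eq_bigr => k _ do rewrite (ccIII _ hij).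
rewrite /nalpha (@nt_gen (rootIII i0 j0) _ (Q (alphac ord0))
   (inord (if i0 == 0 :> nat then (if j0 == 1 :> nat then 1 else 0) else i0.-1))) //.
- move=> k; rewrite Qac /rootIII /corootII; have := ltn_ord k; have := ltn_ord j0; crush.
- rewrite (row_sum (fun k => ((i0 <= k < j0)%N + 2 * (j0 <= k)%N)%N%:Z)) inordK;
    last by have := ltn_ord i0; crush2.
  have := ltn_ord j0; crush2.
- rewrite (col_sum (fun k => (nat_of_bool (i0 <= k < j0)%N + 2 * nat_of_bool (j0 <= k < r.-1)%N
            + nat_of_bool (k == r.-1 :> nat))%N%:Z)) inordK;
    last by have := ltn_ord i0; crush2.
  have := ltn_ord j0; crush2.
Qed.


Local Notation nL := (nalpha n Q (alphac ord0)).
Local Notation nS := (nalpha n Q (alphac ord_max)).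

Lemma natzR (x : nat) : (x%:Z)%:~R = x%:R :> rat.
Proof. by []. Qed.

Lemma sum_iv' s x y : (x <= y <= s)%N ->
  \sum_(k < s) (nat_of_bool ((x <= k) && (k < y))%N)%:Z = (y - x)%N%:Z.
Proof. by move=> h; rewrite sum_iv; lia. Qed.

Lemma fX_split (d : 'I_r -> int) : fX n alphac Q d =
  (\sum_(k < p.+2) d (widen_ord (leqnSn _) k))%:~R / nL%:R + (d ord_max)%:~R / nS%:R.
Proof.
rewrite /fX big_ord_recr /= nt_simple; congr (_ + _).
rewrite intr_sum mulr_suml; apply: eq_bigr => k _.
rewrite nt_simple /nalpha Qac /= (ltn_eqF (ltn_ord k)) mul1r //.
Qed.

Lemma fX_I (i0 j0 : 'I_r) : (i0 < j0)%N ->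
  fX n alphac Q (corootI i0 j0) = (j0 - i0)%:R / nL%:R.
Proof.
move=> h; rewrite fX_split.
have -> : \sum_(k < p.+2) corootI i0 j0 (widen_ord (leqnSn _) k) = (j0 - i0)%N%:Z.
  transitivity (\sum_(k < p.+2) (nat_of_bool ((i0 <= k) && (k < j0))%N)%:Z).
    by apply: eq_bigr.
  by apply: sum_iv'; have := ltn_ord j0; lia.
have -> : corootI i0 j0 ord_max = 0 by rewrite /corootI; have := ltn_ord j0; crush.
by rewrite natzR (_ : (0:int)%:~R = 0 :> rat) // mul0r addr0.
Qed.

Lemma fX_II (i0 j0 : 'I_r) : (i0 < j0)%N ->
  fX n alphac Q (corootII i0 j0) = (j0 - i0 + 2 * (p.+2 - j0))%:R / nL%:R + 1 / nS%:R.
Proof.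
move=> h; rewrite fX_split.
have -> : \sum_(k < p.+2) corootII i0 j0 (widen_ord (leqnSn _) k) = (j0 - i0 + 2 * (p.+2 - j0))%N%:Z.
  transitivity (\sum_(k < p.+2) ((nat_of_bool ((i0 <= k) && (k < j0))%N)%:Z
       + (nat_of_bool ((j0 <= k) && (k < p.+2))%N)%:Z + (nat_of_bool ((j0 <= k) && (k < p.+2))%N)%:Z)).
    by apply: eq_bigr => k _; rewrite /corootII; have := ltn_ord k; crush.
  rewrite !big_split /= !sum_iv'; try (have := ltn_ord j0; lia).
have -> : corootII i0 j0 ord_max = 1 by rewrite /corootII; have := ltn_ord j0; crush.
by rewrite natzR.
Qed.

Lemma fX_III (i0 : 'I_r) :
  fX n alphac Q (corootIII i0) = (2 * (p.+2 - i0))%:R / nL%:R + 1 / nS%:R.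
Proof.
rewrite fX_split.
have -> : \sum_(k < p.+2) corootIII i0 (widen_ord (leqnSn _) k) = (2 * (p.+2 - i0))%N%:Z.
  transitivity (\sum_(k < p.+2) ((nat_of_bool ((i0 <= k) && (k < p.+2))%N)%:Z
       + (nat_of_bool ((i0 <= k) && (k < p.+2))%N)%:Z)).
    by apply: eq_bigr => k _; rewrite /corootIII; have := ltn_ord k; crush.
  rewrite !big_split /= !sum_iv'; try (have := ltn_ord i0; lia).
have -> : corootIII i0 ord_max = 1 by rewrite /corootIII; have := ltn_ord i0; crush.
by rewrite natzR.
Qed.

Lemma fY_I (i0 : 'I_r) : fY n alphac Q (rootI i0) = (p.+3 - i0)%:R / nS%:R.
Proof.
rewrite /fY ntY_I.
have -> : \sum_(k < r) rootI i0 k = (p.+3 - i0)%N%:Z.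
  transitivity (\sum_(k < r) (nat_of_bool ((i0 <= k) && (k < p.+3))%N)%:Z).
    by apply: eq_bigr => k _; rewrite /rootI; have := ltn_ord k; crush.
  by apply: sum_iv'; have := ltn_ord i0; lia.
by rewrite natzR.
Qed.

Lemma fY_II (i0 j0 : 'I_r) : (i0 < j0)%N ->
  fY n alphac Q (rootII i0 j0) = (j0 - i0)%:R / nL%:R.
Proof.
move=> h; rewrite /fY ntY_II //.
have -> : \sum_(k < r) rootII i0 j0 k = (j0 - i0)%N%:Z.
  by apply: sum_iv'; have := ltn_ord j0; lia.
by rewrite natzR.
Qed.

Lemma fY_III (i0 j0 : 'I_r) : (i0 < j0)%N ->
  fY n alphac Q (rootIII i0 j0) = (j0 - i0 + 2 * (p.+3 - j0))%:R / nL%:R.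
Proof.
move=> h; rewrite /fY ntY_III //.
have -> : \sum_(k < r) rootIII i0 j0 k = (j0 - i0 + 2 * (p.+3 - j0))%N%:Z.
  transitivity (\sum_(k < r) ((nat_of_bool ((i0 <= k) && (k < j0))%N)%:Z
       + (nat_of_bool ((j0 <= k) && (k < p.+3))%N)%:Z + (nat_of_bool ((j0 <= k) && (k < p.+3))%N)%:Z)).
    by apply: eq_bigr => k _; rewrite /rootIII; have := ltn_ord k; crush.
  rewrite !big_split /= !sum_iv'; try (have := ltn_ord j0; lia).
by rewrite natzR.
Qed.


Lemma nalpha_gt0 ac : (0 < nalpha n Q ac)%N.
Proof. by rewrite /nalpha divn_gt0 ?gcdn_gt0 ?n0 // dvdn_leq // dvdn_gcdl. Qed.

Lemma inordK' (x : nat) : (x < r)%N -> nat_of_ord (inord x : 'I_r) = x.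
Proof. exact: inordK. Qed.

Lemma part1 (N : nat) :
  (forall i : 'I_r, (i < r.-1)%N -> nalpha n Q (alphac i) = (2 * N)%N) ->
  (forall i : 'I_r, (i = r.-1 :> nat) -> nalpha n Q (alphac i) = N) ->
  (forall i j : 'I_r, (i < j)%N ->
     fX n alphac Q (corootI i j) = (j - i)%:R / (2 * N)%:R /\
     fY n alphac Q (rootII i j) = (j - i)%:R / (2 * N)%:R) /\
  (forall i j : 'I_r, (i < j)%N ->
     fX n alphac Q (corootII i j) = (j - i + 2 * (p.+3 - j))%:R / (2 * N)%:R /\
     fY n alphac Q (rootIII i j) = (j - i + 2 * (p.+3 - j))%:R / (2 * N)%:R) /\
  (forall i : 'I_r,
     fX n alphac Q (corootIII i) = (2 * (p.+3 - i))%:R / (2 * N)%:R /\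
     fY n alphac Q (rootI i) = (2 * (p.+3 - i))%:R / (2 * N)%:R).
Proof.
move=> h1 h2.
have hL : nL = (2 * N)%N by apply: h1.
have hS : nS = N by apply: h2.
have N0 : (0 < N)%N by rewrite -hS nalpha_gt0.
split; [|split].
- by move=> i j hij; rewrite fX_I // fY_II // hL.
- move=> i j hij; rewrite fX_II // fY_III // hL hS ar1 //.
  have -> : (j - i + 2 * (p.+2 - j) + 2 = j - i + 2 * (p.+3 - j))%N.
    by have := ltn_ord j; lia.
  by [].
- move=> i; rewrite fX_III fY_I hL hS ar1 // (ar2 (p.+3 - i)) //.
  have -> : (2 * (p.+2 - i) + 2 = 2 * (p.+3 - i))%N by have := ltn_ord i; lia.
  by [].
Qed.

Lemma part2 (N : nat) :
  (forall i : 'I_r, nalpha n Q (alphac i) = N) ->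
  (forall i j : 'I_r, (i < j)%N ->
     fX n alphac Q (corootI i j) = (j - i)%:R / N%:R /\
     fX n alphac Q (corootII i j) = (j - i + 2 * (p.+2 - j) + 1)%:R / N%:R /\
     fY n alphac Q (rootII i j) = (j - i)%:R / N%:R /\
     fY n alphac Q (rootIII i j) = (j - i + 2 * (p.+3 - j))%:R / N%:R) /\
  (forall i : 'I_r,
     fX n alphac Q (corootIII i) = (2 * (p.+2 - i) + 1)%:R / N%:R /\
     fY n alphac Q (rootI i) = (p.+3 - i)%:R / N%:R).
Proof.
move=> h.
have hL : nL = N by apply: h.
have hS : nS = N by apply: h.
have N0 : (0 < N)%N by rewrite -hS nalpha_gt0.
split.
- move=> i j hij; rewrite fX_I // fX_II // fY_II // fY_III // hL hS ar3 //.
- by move=> i; rewrite fX_III fY_I hL hS ar3.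
Qed.


Local Open Scope classical_set_scope.

Lemma mcI (i j : 'I_r) : (i < j)%N -> PhicPos r (corootI i j).
Proof. by move=> h; left; left; exists i, j. Qed.
Lemma mcII (i j : 'I_r) : (i < j)%N -> PhicPos r (corootII i j).
Proof. by move=> h; left; right; exists i, j. Qed.
Lemma mcIII (i : 'I_r) : PhicPos r (corootIII i).
Proof. by right; exists i. Qed.
Lemma mrI (i : 'I_r) : PhiPos r (rootI i).
Proof. by left; left; exists i. Qed.
Lemma mrII (i j : 'I_r) : (i < j)%N -> PhiPos r (rootII i j).
Proof. by move=> h; left; right; exists i, j. Qed.
Lemma mrIII (i j : 'I_r) : (i < j)%N -> PhiPos r (rootIII i j).
Proof. by move=> h; right; exists i, j. Qed.

Lemma khalf (k : nat) : exists h, k = (2 * h)%N \/ k = (2 * h + 1)%N.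
Proof.
exists k./2; have := odd_double_half k; case: (odd k) => /= e; rewrite -muln2 in e; lia.
Qed.

Ltac fin := rewrite ?inordK'; try lia; congr (_%:R / _); rewrite ?inordK'; lia.

Lemma main_p :
  (forall N : nat,
     (forall i : 'I_r, (i < r.-1)%N -> nalpha n Q (alphac i) = (2 * N)%N) ->
     (forall i : 'I_r, (i = r.-1 :> nat) -> nalpha n Q (alphac i) = N) ->
     [/\ fX n alphac Q @` PhicI r = fY n alphac Q @` PhiII r,
         fX n alphac Q @` PhicII r = fY n alphac Q @` PhiIII r,
         fX n alphac Q @` PhicIII r = fY n alphac Q @` PhiI r,
         fX n alphac Q @` PhicPos r = scaled_interval (2 * N) 1 (2 * r) &
         fY n alphac Q @` PhiPos r = scaled_interval (2 * N) 1 (2 * r)]) /\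
  (forall N : nat,
     (forall i : 'I_r, nalpha n Q (alphac i) = N) ->
     fX n alphac Q @` PhicPos r = scaled_interval N 1 (2 * r - 1) /\
     fY n alphac Q @` PhiPos r = scaled_interval N 1 (2 * r - 1)).
Proof.
split.
- move=> N h1 h2; have [E1 [E2 E3]] := part1 h1 h2.
  split.
  + apply/seteqP; split=> x [c [i [j [hij ->]]] <-].
      by exists (rootII i j); [exists i, j | case: (E1 i j hij) => -> ->].
    by exists (corootI i j); [exists i, j | case: (E1 i j hij) => -> ->].
  + apply/seteqP; split=> x [c [i [j [hij ->]]] <-].
      by exists (rootIII i j); [exists i, j | case: (E2 i j hij) => -> ->].
    by exists (corootII i j); [exists i, j | case: (E2 i j hij) => -> ->].
  + apply/seteqP; split=> x [c [i ->] <-].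
      by exists (rootI i); [exists i | case: (E3 i) => -> ->].
    by exists (corootIII i); [exists i | case: (E3 i) => -> ->].
  + apply/seteqP; split.
    * move=> x [c [[[i [j [hij ->]]] | [i [j [hij ->]]]] | [i ->]] <-].
      - case: (E1 i j hij) => -> _; exists (j - i)%N; split => //; have := ltn_ord j; lia.
      - case: (E2 i j hij) => -> _; exists (j - i + 2 * (p.+3 - j))%N; split => //; have := ltn_ord j; lia.
      - case: (E3 i) => -> _; exists (2 * (p.+3 - i))%N; split => //; have := ltn_ord i; lia.
    * move=> x [k [hk ->]]; have [h [hk2|hk2]] := khalf k.
      - have hi : (p.+3 - h < r)%N by lia.
        exists (corootIII (inord (p.+3 - h))); first exact: mcIII.
        case: (E3 (inord (p.+3 - h))) => -> _; fin.
      - have [h0|hpos] : h = 0%N \/ (0 < h)%N by lia.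
          have hi : ((inord 0 : 'I_r) < (inord 1 : 'I_r))%N by rewrite !inordK'.
          exists (corootI (inord 0) (inord 1)); first by apply: mcI; rewrite !inordK'.
          case: (E1 _ _ hi) => -> _; fin.
        have hi : ((inord (p.+2 - h) : 'I_r) < (inord (p.+3 - h) : 'I_r))%N by rewrite !inordK'; lia.
        exists (corootII (inord (p.+2 - h)) (inord (p.+3 - h))); first exact: mcII.
        case: (E2 _ _ hi) => -> _; fin.
  + apply/seteqP; split.
    * move=> x [c [[[i ->] | [i [j [hij ->]]]] | [i [j [hij ->]]]] <-].
      - case: (E3 i) => _ ->; exists (2 * (p.+3 - i))%N; split => //; have := ltn_ord i; lia.
      - case: (E1 i j hij) => _ ->; exists (j - i)%N; split => //; have := ltn_ord j; lia.
      - case: (E2 i j hij) => _ ->; exists (j - i + 2 * (p.+3 - j))%N; split => //; have := ltn_ord j; lia.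
    * move=> x [k [hk ->]]; have [h [hk2|hk2]] := khalf k.
      - have hi : (p.+3 - h < r)%N by lia.
        exists (rootI (inord (p.+3 - h))); first exact: mrI.
        case: (E3 (inord (p.+3 - h))) => _ ->; fin.
      - have [h0|hpos] : h = 0%N \/ (0 < h)%N by lia.
          have hi : ((inord 0 : 'I_r) < (inord 1 : 'I_r))%N by rewrite !inordK'.
          exists (rootII (inord 0) (inord 1)); first by apply: mrII; rewrite !inordK'.
          case: (E1 _ _ hi) => _ ->; fin.
        have hi : ((inord (p.+2 - h) : 'I_r) < (inord (p.+3 - h) : 'I_r))%N by rewrite !inordK'; lia.
        exists (rootIII (inord (p.+2 - h)) (inord (p.+3 - h))); first exact: mrIII.
        case: (E2 _ _ hi) => _ ->; fin.
- move=> N hA; have [F1 F2] := part2 hA.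
  split.
  + apply/seteqP; split.
    * move=> x [c [[[i [j [hij ->]]] | [i [j [hij ->]]]] | [i ->]] <-].
      - case: (F1 i j hij) => -> _; exists (j - i)%N; split => //; have := ltn_ord j; lia.
      - case: (F1 i j hij) => _ [-> _]; exists (j - i + 2 * (p.+2 - j) + 1)%N; split => //; have := ltn_ord j; lia.
      - case: (F2 i) => -> _; exists (2 * (p.+2 - i) + 1)%N; split => //; have := ltn_ord i; lia.
    * move=> x [k [hk ->]]; have [h [hk2|hk2]] := khalf k.
      - have hi : ((inord (p.+2 - h) : 'I_r) < (inord (p.+3 - h) : 'I_r))%N by rewrite !inordK'; lia.
        exists (corootII (inord (p.+2 - h)) (inord (p.+3 - h))); first exact: mcII.
        case: (F1 _ _ hi) => _ [-> _]; fin.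
      - have hi : (p.+2 - h < r)%N by lia.
        exists (corootIII (inord (p.+2 - h))); first exact: mcIII.
        case: (F2 (inord (p.+2 - h))) => -> _; fin.
  + apply/seteqP; split.
    * move=> x [c [[[i ->] | [i [j [hij ->]]]] | [i [j [hij ->]]]] <-].
      - case: (F2 i) => _ ->; exists (p.+3 - i)%N; split => //; have := ltn_ord i; lia.
      - case: (F1 i j hij) => _ [_ [-> _]]; exists (j - i)%N; split => //; have := ltn_ord j; lia.
      - case: (F1 i j hij) => _ [_ [_ ->]]; exists (j - i + 2 * (p.+3 - j))%N; split => //; have := ltn_ord j; lia.
    * move=> x [k [hk ->]].
      have [hle|hgt] : (k <= p.+3)%N \/ (p.+4 <= k)%N by lia.
      - have hi : (p.+3 - k < r)%N by lia.
        exists (rootI (inord (p.+3 - k))); first exact: mrI.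
        case: (F2 (inord (p.+3 - k))) => _ ->; fin.
      - have hi : ((inord 0 : 'I_r) < (inord (2 * p.+3 - k) : 'I_r))%N by rewrite !inordK'; lia.
        exists (rootIII (inord 0) (inord (2 * p.+3 - k))); first exact: mrIII.
        case: (F1 _ _ hi) => _ [_ [_ ->]]; fin.
Qed.

End Main2.

Local Open Scope classical_set_scope.

Theorem lemma3p2 (r m n : nat) (alpha alphac : 'I_r -> 'rV[int]_m)
  (Q : 'rV[int]_m -> int) :
  (3 <= r)%N -> (0 < n)%N ->
  (forall i j : 'I_r, dpair (alpha j) (alphac i) = cartanB i j) ->
  is_quadratic_form Q ->
  (forall (i : 'I_r) (y : 'rV[int]_m),
      Q (y - dpair (alpha i) y *: alphac i) = Q y) ->
  (forall N : nat,
     (forall i : 'I_r, (i < r.-1)%N -> nalpha n Q (alphac i) = (2 * N)%N) ->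
     (forall i : 'I_r, (i = r.-1 :> nat) -> nalpha n Q (alphac i) = N) ->
     [/\ fX n alphac Q @` PhicI r = fY n alphac Q @` PhiII r,
         fX n alphac Q @` PhicII r = fY n alphac Q @` PhiIII r,
         fX n alphac Q @` PhicIII r = fY n alphac Q @` PhiI r,
         fX n alphac Q @` PhicPos r = scaled_interval (2 * N) 1 (2 * r) &
         fY n alphac Q @` PhiPos r = scaled_interval (2 * N) 1 (2 * r)]) /\
  (forall N : nat,
     (forall i : 'I_r, nalpha n Q (alphac i) = N) ->
     fX n alphac Q @` PhicPos r = scaled_interval N 1 (2 * r - 1) /\
     fY n alphac Q @` PhiPos r = scaled_interval N 1 (2 * r - 1)).
Proof.
case: r alpha alphac => [|[|[|p]]] alpha alphac; try by [].
move=> _ n0 Hcar HQ HW.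
by apply: main_p.
Qed.
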